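(* Let $\overrightarrow{W}$ be a Morse sequence on a simplicial complex $K$. (1) The map $\widetilde\curlywedge_p:\widehat W[p]\to\overline O[p]$ is a vector space isomorphism whose inverse is the restriction of $\curlywedge_p$ to $\overline O[p]$. (2) The map $\widetilde\curlyvee_p:\widehat W[p]\to\underline O[p]$ is a vector space isomorphism whose inverse is the restriction of $\curlyvee_p$ to $\underline O[p]$.
   Context: A simplicial complex $K$ is a finite collection of non-empty finite sets closed under taking non-empty subsets; $\dim\sigma=|\sigma|-1$, $K^{(p)}$ the set of $p$-simplices. A pair $(\sigma,\tau)$ with $\sigma\subsetneq\tau$ is a free pair for $K$ if $\tau$ is the only simplex other than $\sigma$ containing $\sigma$; $K$ is then an elementary expansion of $K\setminus\{\sigma,\tau\}$. If $\nu$ is a facet (maximal simplex) of $K$, $K$ is an elementary filling of $K\setminus\{\nu\}$. A Morse sequence on $K$ is a sequence $\langle\emptyset=K_0,\dots,K_k=K\rangle$ with each $K_i$ an elementary expansion or filling of $K_{i-1}$; simplices added by fillings are critical; for an expansion $K_i=K_{i-1}\cup\{\sigma,\tau\}$, $\sigma\subset\tau$, $\sigma$ is lower regular and $\tau$ upper regular. $\widehat W$ is the set of critical simplices. $K[p]$ is the $\mathbb{Z}_2$-vector space of subsets of $K^{(p)}$ (sum = symmetric difference, $0=\emptyset$), $\widehat W[p]=\{c\in K[p]:c\subseteq\widehat W\}$. For $\sigma\in K^{(p)}$, $\partial(\sigma)=\{\tau\in K^{(p-1)}:\tau\subset\sigma\}$, $\delta(\sigma)=\{\tau\in K^{(p+1)}:\sigma\subset\tau\}$.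 The reference map $\curlywedge$ is the unique map assigning to each $p$-simplex an element of $\widehat W[p]$, with linear extension $\curlywedge_p:K[p]\to\widehat W[p]$, such that $\curlywedge(\nu)=\{\nu\}$ for critical $\nu$ and $\curlywedge(\tau)=0=\curlywedge(\partial(\tau))$ for upper regular $\tau$ (with $\partial(\tau)$ viewed as a chain); the coreference map $\curlyvee$ (linear extension $\curlyvee_p$) is the unique such map with $\curlyvee(\nu)=\{\nu\}$ for critical $\nu$ and $\curlyvee(\sigma)=0=\curlyvee(\delta(\sigma))$ for lower regular $\sigma$. The extension and coextension maps are the linear maps $\widetilde\curlywedge_p,\widetilde\curlyvee_p:\widehat W[p]\to K[p]$ with $\widetilde\curlywedge(\kappa)=\{\nu\in K:\kappa\in\curlyvee(\nu)\}$ and $\widetilde\curlyvee(\kappa)=\{\nu\in K:\kappa\in\curlywedge(\nu)\}$ for critical $p$-simplices $\kappa$. $\overline O[p]$ and $\underline O[p]$ denote the images of $\widetilde\curlywedge_p$ and $\widetilde\curlyvee_p$ respectively (subspaces of $K[p]$). *)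

(* Defs.v *)
(* Z_2-chains of p-simplices are represented as sets of p-simplices
   (sum = symmetric difference). *)
From mathcomp Require Import all_boot.
Set Implicit Arguments. Unset Strict Implicit. Unset Printing Implicit Defensive.

Section Defs.
Variable V : finType.
Notation simplex := {set V}.
Notation family := {set {set V}}.

Definition is_complex (K : family) : Prop :=
  forall s, s \in K -> s != set0 /\
    (forall t : simplex, t \subset s -> t != set0 -> t \in K).

Definition free_pair (K : family) (s t : simplex) : Prop :=
  [/\ s \proper t, s \in K, t \in K &
      forall r, r \in K -> s \subset r -> r = s \/ r = t].

Definition facet (K : family) (n : simplex) : Prop :=
  n \in K /\ forall r, r \in K -> n \subset r -> r = n.

Inductive step := Fill of simplex | Expand of simplex & simplex.

Definition added (x : step) : family :=
  match x with Fill n => [set n] | Expand s t => [set s; t] end.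

Definition Kof (W : seq step) : family := \bigcup_(x <- W) added x.

Definition morse_step (Kprev : family) (x : step) : Prop :=
  let K := Kprev :|: added x in
  is_complex K /\
  match x with
  | Fill n => n \notin Kprev /\ facet K n
  | Expand s t => [/\ s \notin Kprev, t \notin Kprev & free_pair K s t]
  end.

Definition morse_seq (K : family) (W : seq step) : Prop :=
  (forall i, i < size W -> morse_step (Kof (take i W)) (nth (Fill set0) W i))
  /\ Kof W = K.

Definition critical (W : seq step) : family :=
  \bigcup_(x <- W) (match x with Fill n => [set n] | Expand _ _ => set0 end).
Definition lower_regular (W : seq step) : family :=
  \bigcup_(x <- W) (match x with Fill _ => set0 | Expand s _ => [set s] end).
Definition upper_regular (W : seq step) : family :=
  \bigcup_(x <- W) (match x with Fill _ => set0 | Expand _ t => [set t] end).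

(* K^(p): p-simplices (dim s = |s| - 1) *)
Definition psimplices (K : family) (p : nat) : family :=
  [set s in K | #|s| == p.+1].

(* hat W^(p): critical p-simplices; hat W[p] = chains c ⊆ this set *)
Definition crit_p (W : seq step) (p : nat) : family :=
  [set s in critical W | #|s| == p.+1].

Definition bdry (K : family) (s : simplex) : family :=
  [set t in K | (t \proper s) && (#|t| == #|s|.-1)].
Definition cobdry (K : family) (s : simplex) : family :=
  [set t in K | (s \proper t) && (#|t| == #|s|.+1)].

Definition symdiff (A B : family) : family := (A :\: B) :|: (B :\: A).

(* Z_2-linear extension of a map f on simplices to a chain c:
   f_p(c) = sum_{s in c} f(s) *)
Definition linext (f : simplex -> family) (c : family) : family :=
  [set k | odd #|[set s in c | k \in f s]|].

Definition is_reference_map (K : family) (W : seq step)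
    (r : simplex -> family) : Prop :=
  [/\ forall s, s \in K -> r s \subset [set k in critical W | #|k| == #|s|],
      forall n, n \in critical W -> r n = [set n] &
      forall t, t \in upper_regular W ->
        r t = set0 /\ linext r (bdry K t) = set0].

Definition is_coreference_map (K : family) (W : seq step)
    (c : simplex -> family) : Prop :=
  [/\ forall s, s \in K -> c s \subset [set k in critical W | #|k| == #|s|],
      forall n, n \in critical W -> c n = [set n] &
      forall s, s \in lower_regular W ->
        c s = set0 /\ linext c (cobdry K s) = set0].

(* extension-type map: for critical k, ext(k) = {n in K | k in g n},
   extended linearly; with g = coreference it is the extension map,
   with g = reference it is the coextension map. *)
Definition ext (K : family) (g : simplex -> family) (c : family) : family :=
  [set n in K | odd #|[set k in c | k \in g n]|].

(* image of ext on hat W[p]:  O-bar[p] (g = coref) / O-underline[p] (g = ref) *)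
Definition ext_image (K : family) (W : seq step) (g : simplex -> family)
    (p : nat) : {set family} :=
  [set ext K g c | c in powerset (crit_p W p)].

Definition iso_with_inverse (Wp : family) (O : {set family})
    (phi psi : family -> family) : Prop :=
  [/\ (forall c1 c2 : family, c1 \subset Wp -> c2 \subset Wp ->
         phi (symdiff c1 c2) = symdiff (phi c1) (phi c2)),
      (forall c : family, c \subset Wp -> phi c \in O),
      (forall c : family, c \subset Wp -> psi (phi c) = c) &
      (forall d, d \in O -> psi d \subset Wp /\ phi (psi d) = d)].
End Defs.

(* Main.v *)
Require Import Defs.
From mathcomp Require Import all_boot.

Section S.
Variable V : finType.

Lemma Kof_cases (W : seq (step V)) n : n \in Kof W ->
  [|| n \in critical W, n \in lower_regular W | n \in upper_regular W].
Proof.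
rewrite /Kof /critical /lower_regular /upper_regular.
elim: W => [|x W IH]; first by rewrite !big_nil inE.
rewrite !big_cons !inE; case: x => [m|s t] /=; rewrite ?inE.
- by case/orP=> [->//|/IH]; case/or3P=> ->; rewrite ?orbT.
- by case/orP=> [/orP[]->|/IH]; rewrite ?orbT //; case/or3P=> ->; rewrite ?orbT.
Qed.

Lemma crit_Kof (W : seq (step V)) n : n \in critical W -> n \in Kof W.
Proof.
rewrite /Kof /critical.
elim: W => [|x W IH]; first by rewrite !big_nil inE.
rewrite !big_cons !inE; case: x => [m|s t] /=; rewrite ?inE.
- by case/orP=> [->//|/IH ->]; rewrite orbT.
- by move/IH=> ->; rewrite orbT.
Qed.

Lemma odd_symdiff (A B : {set {set V}}) (P : pred {set V}) :
  odd #|[set k in symdiff A B | P k]| =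
  odd #|[set k in A | P k]| (+) odd #|[set k in B | P k]|.
Proof.
set A' := [set k in A | P k]; set B' := [set k in B | P k].
have -> : [set k in symdiff A B | P k] = symdiff A' B'.
  by apply/setP=> k; rewrite /symdiff !inE; case: (k \in A); case: (k \in B); case: (P k).
rewrite /symdiff cardsU.
have -> : (A' :\: B') :&: (B' :\: A') = set0.
  by apply/setP=> k; rewrite !inE; case: (k \in A); case: (k \in B); case: (P k).
rewrite cards0 subn0 -(cardsID B' A') -(cardsID A' B') setIC !oddD.
by case: (odd _); case: (odd _); case: (odd _).
Qed.

Section Gen.
Variables (K : {set {set V}}) (W : seq (step V)) (g h : {set V} -> {set {set V}}).
Hypothesis HK : Kof W = K.
Hypothesis Hcrit : forall n, n \in critical W -> g n = [set n] /\ h n = [set n].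
Hypothesis Hreg : forall n, n \in K -> n \notin critical W -> g n = set0 \/ h n = set0.
Variable p : nat.

Lemma ext_lin c1 c2 :
  ext K g (symdiff c1 c2) = symdiff (ext K g c1) (ext K g c2).
Proof.
apply/setP=> n; rewrite /symdiff /ext !inE odd_symdiff.
by case: (n \in K); case: (odd _); case: (odd _).
Qed.

Lemma inv_ext (c : {set {set V}}) : c \subset crit_p W p -> linext h (ext K g c) = c.
Proof.
move=> sc; apply/setP=> k; rewrite /linext inE.
have cc : forall m, m \in c -> m \in critical W.
  by move=> m /(subsetP sc); rewrite inE => /andP[].
have -> : [set s in ext K g c | k \in h s] = if k \in c then [set k] else set0.
  apply/setP=> n; rewrite /ext !inE.
  case nK: (n \in K) => /=; last first.
    case kc: (k \in c); rewrite ?inE //.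
    apply/esym/negP=> /eqP en; subst n.
    by move: nK; rewrite -HK (@crit_Kof W _ (cc _ kc)).
  case nc: (n \in critical W).
    have [-> ->] := Hcrit _ nc.
    rewrite inE.
    have -> : [set k0 in c | k0 \in [set n]] = if n \in c then [set n] else set0.
      apply/setP=> m; rewrite !inE; case: eqP => [->|/eqP mn]; case: (n \in c).
        all: try by rewrite ?inE ?eqxx ?andbT ?andbF ?(negbTE mn).
    case: (eqVneq k n) => [->|kn]; last by rewrite andbF; case: (k \in c); rewrite ?inE // eq_sym (negbTE kn).
    by case: (n \in c); rewrite ?cards1 ?cards0 ?inE ?eqxx.
  have nc' : n \notin critical W by rewrite nc.
  have -> : (n \in (if k \in c then [set k] else set0)) = false.
    case kc: (k \in c); rewrite ?inE //; apply/negP=> /eqP en; subst n.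
    by move: nc; rewrite (cc _ kc).
  case: (Hreg _ nK nc') => ->; last by rewrite inE andbF.
  have -> : [set k0 in c | k0 \in set0] = set0 by apply/setP=> m; rewrite !inE andbF.
  by rewrite cards0.
by case: (k \in c); rewrite ?cards1 ?cards0.
Qed.

Lemma gen_iso : iso_with_inverse (crit_p W p) (ext_image K W g p) (ext K g) (linext h).
Proof.
split.
- by move=> c1 c2 _ _; apply: ext_lin.
- by move=> c sc; apply/imsetP; exists c => //; rewrite powersetE.
- by move=> c sc; apply: inv_ext.
- move=> d /imsetP[c]; rewrite powersetE => sc ->.
  by rewrite inv_ext.
Qed.
End Gen.
End S.

Theorem proposition19 (V : finType) (K : {set {set V}}) (W : seq (step V))
    (rf cf : {set V} -> {set {set V}}) (p : nat) :
  morse_seq K W ->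
  is_reference_map K W rf ->
  is_coreference_map K W cf ->
  iso_with_inverse (crit_p W p) (ext_image K W cf p) (ext K cf) (linext rf) /\
  iso_with_inverse (crit_p W p) (ext_image K W rf p) (ext K rf) (linext cf).
Proof.
move=> [_ HK] [_ r2 r3] [_ c2 c3].
have Hreg : forall n, n \in K -> n \notin critical W -> cf n = set0 \/ rf n = set0.
  move=> n; rewrite -HK => /Kof_cases /or3P[->//|/c3[-> _]|/r3[-> _]]; by [left|right].
split.
- apply: (@gen_iso _ K W cf rf HK) => //; by move=> n nc; rewrite r2 ?c2.
- apply: (@gen_iso _ K W rf cf HK) => //.
    by move=> n nc; rewrite r2 ?c2.
  by move=> n nK nc; case: (Hreg n nK nc); [right|left].
Qed.
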